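(* Let $(\Sigma,E)$ be an algebraic theory and let $(T,\eta,\mu)=(T_{\Sigma,E},\eta_{\Sigma,E},\mu_{\Sigma,E})$ be its free monad on $\mathbf{Set}$. Then the algebraic theory $(\Sigma^{\mathrm{s}},E^{\mathrm{s}})$ is an algebraic presentation of the semifree monad $(T^{\mathrm{s}},\eta^{\mathrm{s}},\mu^{\mathrm{s}})$ on $T$, i.e. the monad $T_{\Sigma^{\mathrm{s}},E^{\mathrm{s}}}$ is isomorphic (as a monad) to $T^{\mathrm{s}}$.
   Context: An algebraic signature $\Sigma$ is a set of operation symbols, each with an arity $n\in\mathbb{N}$ (written $(\mathsf{op}:n)$). $\mathrm{Var}=\{v_1,v_2,\dots\}$ is a fixed set of variables; an equation is a pair of $\Sigma$-terms over $\mathrm{Var}$; an algebraic theory $(\Sigma,E)$ is a signature with a set $E$ of equations. The free monad $T_{\Sigma,E}$ of $(\Sigma,E)$ sends a set $X$ to the set of $\Sigma$-terms over $X$ modulo the smallest congruence containing all substitution instances of equations of $E$; its unit sends $x$ to the class $\overline{x}$, and its multiplication flattens terms: $\overline{t[\overline{t_i}/v_i]}\mapsto\overline{t[t_i/v_i]}$. An algebraic theory $(\Sigma',E')$ is an algebraic presentation of a $\mathbf{Set}$-monad $M$ if $T_{\Sigma',E'}\cong M$ as monads. For a monad $(M,\eta,\mu)$ on a category with finite coproducts, the semifree monad is $M^{\mathrm{s}}=\mathrm{Id}+M$ with unit $\eta^{\mathrm{s}}=\mathrm{inl}$ and multiplication $\mu^{\mathrm{s}}=[\mathrm{id}_{\mathrm{Id}+M},\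 \mathrm{inr}\circ\mu\circ M[\eta,\mathrm{id}_M]]$. Given $(\Sigma,E)$, the theory $(\Sigma^{\mathrm{s}},E^{\mathrm{s}})$ has signature $\Sigma^{\mathrm{s}}=\Sigma\uplus\{\mathsf{a}:1\}$ and equations $E^{\mathrm{s}}$ consisting of: $\mathsf{a}\mathsf{a}v_1=\mathsf{a}v_1$; $\mathsf{a}(\mathsf{op}(v_1,\dots,v_n))=\mathsf{op}(v_1,\dots,v_n)$ and $\mathsf{op}(\mathsf{a}v_1,\dots,\mathsf{a}v_n)=\mathsf{op}(v_1,\dots,v_n)$ for every $(\mathsf{op}:n)\in\Sigma$; and $t(\mathsf{a}v_1,\dots,\mathsf{a}v_n)=s(\mathsf{a}v_1,\dots,\mathsf{a}v_n)$ for every equation $t(v_1,\dots,v_n)=s(v_1,\dots,v_n)$ in $E$. *)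

(* Defs.v *)
From mathcomp Require Import ssreflect ssrfun ssrbool eqtype ssrnat fintype.
From Stdlib Require Import ClassicalEpsilon.

Set Implicit Arguments.
Unset Strict Implicit.
Unset Printing Implicit Defensive.

Record setMonad := SetMonad {
  mF :> Type -> Type;
  mmap : forall X Y : Type, (X -> Y) -> mF X -> mF Y;
  mret : forall X : Type, X -> mF X;
  mjoin : forall X : Type, mF (mF X) -> mF X }.
Arguments mmap s {X Y} _ _.
Arguments mret s {X} _.
Arguments mjoin s {X} _.

Definition monad_iso (M N : setMonad) : Prop :=
  exists alpha : forall X : Type, M X -> N X,
    [/\ (forall X, bijective (alpha X)),
        (forall X Y (f : X -> Y) (m : M X),
            alpha Y (mmap M f m) = mmap N f (alpha X m)),
        (forall X (x : X), alpha X (mret M x) = mret N x) &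
        (forall X (m : M (M X)),
            alpha X (mjoin M m) = mjoin N (alpha (N X) (mmap M (alpha X) m)))].

Definition semifree (M : setMonad) : setMonad :=
  @SetMonad (fun X => (X + M X)%type)
    (fun X Y f s => match s with
                    | inl x => inl (f x)
                    | inr m => inr (mmap M f m) end)
    (fun X x => inl x)
    (fun X s => match s with
                | inl y => y
                | inr m => inr (mjoin M (mmap M
                             (fun y => match y with
                                       | inl x => mret M x
                                       | inr n => n end) m)) end).

Section Syntax.
Variables (O : Type) (ar : O -> nat).

Inductive term (X : Type) : Type :=
| Var of X
| Op (o : O) of ('I_(ar o) -> term X).
Arguments Var {X} _.
Arguments Op {X} o _.

Fixpoint bind (X Y : Type) (t : term X) (s : X -> term Y) : term Y :=
  match t with
  | Var x => s x
  | Op o a => Op o (fun i => bind (a i) s)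
  end.

Definition tmap (X Y : Type) (f : X -> Y) (t : term X) : term Y :=
  bind t (fun x => Var (f x)).

(** Equations are pairs of terms over the variables Var = nat (v_{i+1} ~ i). *)
Variable E : term nat -> term nat -> Prop.

Inductive eqv (X : Type) : term X -> term X -> Prop :=
| eqv_ax (l r : term nat) (s : nat -> term X) :
    E l r -> eqv (bind l s) (bind r s)
| eqv_refl t : eqv t t
| eqv_sym t u : eqv t u -> eqv u t
| eqv_trans t u w : eqv t u -> eqv u w -> eqv t w
| eqv_cong (o : O) (a b : 'I_(ar o) -> term X) :
    (forall i, eqv (a i) (b i)) -> eqv (Op o a) (Op o b).

Definition quot (X : Type) : Type :=
  {P : term X -> Prop | exists t : term X, P = eqv t}.

Definition cls (X : Type) (t : term X) : quot X :=
  exist (fun P => exists u, P = eqv u) (eqv t) (ex_intro _ t erefl).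

Definition repr (X : Type) (c : quot X) : term X :=
  proj1_sig (constructive_indefinite_description _ (proj2_sig c)).

Definition free_monad : setMonad :=
  @SetMonad quot
    (fun X Y f c => cls (tmap f (repr c)))
    (fun X x => cls (Var x))
    (fun X c => cls (bind (repr c) (fun q => repr q))).

End Syntax.
Arguments Var {O} ar {X} _.
Arguments Op {O ar X} o _.

Section Semi.
Variables (O : Type) (ar : O -> nat).

(** Sigma^s = Sigma + {a : 1}; None is the new unary symbol a. *)
Definition sar (o : option O) : nat :=
  match o with Some o => ar o | None => 1 end.

Definition sA (X : Type) (u : term sar X) : term sar X :=
  Op (None : option O) (fun _ => u).

Fixpoint embedA (t : term ar nat) : term sar nat :=
  match t with
  | Var v => sA (Var sar v)
  | Op o a => Op (Some o) (fun i => embedA (a i))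
  end.

Variable E : term ar nat -> term ar nat -> Prop.

Inductive semi_eqs : term sar nat -> term sar nat -> Prop :=
| se_aa : semi_eqs (sA (sA (Var sar 0))) (sA (Var sar 0))
| se_aop (o : O) :
    semi_eqs (sA (Op (Some o) (fun i => Var sar (nat_of_ord i))))
             (Op (Some o) (fun i => Var sar (nat_of_ord i)))
| se_opa (o : O) :
    semi_eqs (Op (Some o) (fun i => sA (Var sar (nat_of_ord i))))
             (Op (Some o) (fun i => Var sar (nat_of_ord i)))
| se_E (t s : term ar nat) : E t s -> semi_eqs (embedA t) (embedA s).

End Semi.

(* Main.v *)
Require Import Defs.
From mathcomp Require Import ssreflect ssrfun ssrbool eqtype ssrnat fintype.
From Stdlib Require Import ClassicalEpsilon FunctionalExtensionality PropExtensionality ProofIrrelevance.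
Set Implicit Arguments.
Unset Strict Implicit.
Unset Printing Implicit Defensive.

Section Gen.
Variables (O : Type) (ar : O -> nat) (E : term ar nat -> term ar nat -> Prop).

Lemma bind_assoc X Y Z (t : term ar X) (s : X -> term ar Y) (s' : Y -> term ar Z) :
  bind (bind t s) s' = bind t (fun x => bind (s x) s').
Proof.
elim: t => [x|o a IH] //=; congr Op; apply: functional_extensionality => i; exact: IH.
Qed.

Lemma eqv_bind_l X Y (t u : term ar X) (s : X -> term ar Y) :
  eqv E t u -> eqv E (bind t s) (bind u s).
Proof.
elim=> {t u} [l r s0 H|t|t u _ IH|t u w _ IH1 _ IH2|o a b _ IH].
- rewrite !bind_assoc; exact: eqv_ax.
- exact: eqv_refl.
- exact: eqv_sym.
- exact: eqv_trans IH2.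
- by apply: eqv_cong.
Qed.

Lemma eqv_bind_r X Y (t : term ar X) (s s' : X -> term ar Y) :
  (forall x, eqv E (s x) (s' x)) -> eqv E (bind t s) (bind t s').
Proof.
move=> H; elim: t => [x|o a IH] //=; exact: eqv_cong.
Qed.

Lemma quot_ext X (c d : quot E X) : proj1_sig c = proj1_sig d -> c = d.
Proof.
case: c d => [P HP] [Q HQ] /= e; subst Q; congr exist; exact: proof_irrelevance.
Qed.

Lemma repr_spec X (c : quot E X) : proj1_sig c = eqv E (repr c).
Proof.
rewrite /repr; case: (constructive_indefinite_description _ _) => t /= ->; done.
Qed.

Lemma cls_repr X (c : quot E X) : cls E (repr c) = c.
Proof. apply: quot_ext => /=; by rewrite repr_spec. Qed.

Lemma cls_eq X (t u : term ar X) : eqv E t u -> cls E t = cls E u.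
Proof.
move=> H; apply: quot_ext => /=.
apply: functional_extensionality => w; apply: propositional_extensionality; split=> H'.
- exact: eqv_trans (eqv_sym H) H'.
- exact: eqv_trans H H'.
Qed.

Lemma cls_inj X (t u : term ar X) : cls E t = cls E u -> eqv E t u.
Proof.
move=> /(f_equal (@proj1_sig _ _)) /= e; rewrite e; exact: eqv_refl.
Qed.

Lemma repr_cls X (t : term ar X) : eqv E (repr (cls E t)) t.
Proof. apply: cls_inj; exact: cls_repr. Qed.

End Gen.

Section Semi.
Variables (O : Type) (ar : O -> nat) (E : term ar nat -> term ar nat -> Prop).
Notation sr := (sar ar).
Notation S := (@semi_eqs O ar E).

Fixpoint erase X (u : term sr X) : term ar X :=
  match u with
  | Var x => Var ar x
  | Op o a =>
    match o as o' return ('I_(sr o') -> term sr X) -> term ar X with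
    | Some o => fun a => Op o (fun i => erase (a i))
    | None => fun a => erase (a ord0)
    end a
  end.

Definition vof X (u : term sr X) : option X :=
  match u with Var x => Some x | _ => None end.

Fixpoint embA X (t : term ar X) : term sr X :=
  match t with
  | Var x => sA (Var sr x)
  | Op o a => Op (Some o : option O) (fun i => embA (a i))
  end.

Definition Phi X (u : term sr X) : X + quot E X :=
  match vof u with Some x => inl x | None => inr (cls E (erase u)) end.

Lemma erase_bind X Y (u : term sr X) (s : X -> term sr Y) :
  erase (bind u s) = bind (erase u) (fun x => erase (s x)).
Proof.
elim: u => [x|[o|] a IH] //=.
congr Op; apply: functional_extensionality => i; exact: IH.
Qed.

Lemma erase_embedA (t : term ar nat) : erase (embedA t) = t.
Proof.
elim: t => [x|o a IH] //=; congr Op; apply: functional_extensionality => i; exact: IH.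
Qed.

Lemma erase_embA X (t : term ar X) : erase (embA t) = t.
Proof.
elim: t => [x|o a IH] //=; congr Op; apply: functional_extensionality => i; exact: IH.
Qed.

Lemma vof_embA X (t : term ar X) : vof (embA t) = None.
Proof. by case: t. Qed.

Lemma semi_nonvar l r X (s : nat -> term sr X) :
  S l r -> vof (bind l s) = None /\ vof (bind r s) = None.
Proof. case=> // t u _; by case: t; case: u. Qed.

Lemma eqv_erase X (u v : term sr X) : eqv S u v -> eqv E (erase u) (erase v).
Proof.
elim=> {u v} [l r s H|t|t u _ IH|t u w _ IH1 _ IH2|[o|] a b _ IH].
- rewrite !erase_bind; case: H => [|o|o|t u H] /=; try exact: eqv_refl.
  rewrite !erase_embedA; exact: eqv_ax.
- exact: eqv_refl.
- exact: eqv_sym.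
- exact: eqv_trans IH2.
- by apply: eqv_cong.
- exact: IH.
Qed.

Lemma eqv_vof X (u v : term sr X) : eqv S u v -> vof u = vof v.
Proof.
elim=> {u v} [l r s H|t|t u _ IH|t u w _ IH1 _ IH2|o a b _ IH] //.
- by case: (semi_nonvar s H) => -> ->.
- by rewrite IH1.
Qed.

Lemma Phi_eqv X (u v : term sr X) : eqv S u v -> Phi u = Phi v.
Proof.
move=> H; rewrite /Phi (eqv_vof H); case: (vof v) => // .
congr inr; apply: cls_eq; exact: eqv_erase.
Qed.

Definition ext X (o : option O) (c : 'I_(sr o) -> term sr X) (n : nat) : term sr X :=
  match (insub n : option 'I_(sr o)) with Some i => c i | None => Op o c end.

Lemma ext_ord X o (c : 'I_(sr o) -> term sr X) :
  (fun i : 'I_(sr o) => ext c (nat_of_ord i)) = c.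
Proof.
apply: functional_extensionality => i; by rewrite /ext valK.
Qed.

Lemma a_embA X (t : term ar X) : eqv S (sA (embA t)) (embA t).
Proof.
case: t => [x|o a] /=.
- exact: (eqv_ax (fun _ => Var sr x) (se_aa E)).
- have := eqv_ax (ext (o := Some o) (fun i => embA (a i))) (se_aop E o).
  by rewrite /= (ext_ord (o := Some o)).
Qed.

Lemma opa X o (c : 'I_(ar o) -> term sr X) :
  eqv S (Op (Some o : option O) (fun i => sA (c i))) (Op (Some o : option O) c).
Proof.
have := eqv_ax (ext (o := Some o) c) (se_opa E o).
have e1 : (fun i : 'I_(ar o) => sA (ext (o := Some o) c i)) = (fun i => sA (c i)).
  by apply: functional_extensionality => i; rewrite /ext valK.
by rewrite /= e1 (ext_ord (o := Some o)).
Qed.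

Lemma vof_None_Var X (u : term sr X) x : vof u = Some x -> u = Var sr x.
Proof. by case: u => //= y [->]. Qed.

Lemma nf X (u : term sr X) : vof u = None -> eqv S u (embA (erase u)).
Proof.
elim: u => [x|[o|] a IH] //= _.
- pose c i := match vof (a i) with Some x => Var sr x | None => embA (erase (a i)) end.
  have h1 : forall i, eqv S (a i) (c i).
    move=> i; rewrite /c; case E1: (vof (a i)) => [x|].
    + rewrite (vof_None_Var E1); exact: eqv_refl.
    + exact: IH.
  have h2 : forall i, eqv S (sA (c i)) (embA (erase (a i))).
    move=> i; rewrite /c; case E1: (vof (a i)) => [x|].
    + rewrite (vof_None_Var E1); exact: eqv_refl.
    + exact: a_embA.
  apply: eqv_trans (eqv_cong (o := Some o) h1) _.
  apply: eqv_trans (eqv_sym (opa c)) _.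
  exact: (eqv_cong (o := Some o) h2).
- have ea : a = fun _ => a ord0.
    by apply: functional_extensionality => i; rewrite (ord1 i).
  case E1: (vof (a ord0)) => [x|].
  + rewrite ea (vof_None_Var E1) /=; exact: eqv_refl.
  + apply: eqv_trans (a_embA _); rewrite ea; apply: (eqv_cong (o := None)) => _.
    exact: IH.
Qed.

Lemma embA_bind X (l : term ar nat) (s : nat -> term ar X) :
  eqv S (bind (embedA l) (fun n => embA (s n))) (embA (bind l s)).
Proof.
elim: l => [v|o a IH] /=.
- exact: a_embA.
- exact: (eqv_cong (o := Some o)).
Qed.

Lemma eqv_embA X (t u : term ar X) : eqv E t u -> eqv S (embA t) (embA u).
Proof.
elim=> {t u} [l r s H|t|t u _ IH|t u w _ IH1 _ IH2|o a b _ IH].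
- apply: eqv_trans (eqv_sym (embA_bind l s)) _.
  apply: eqv_trans (embA_bind r s); exact: eqv_ax (se_E H).
- exact: eqv_refl.
- exact: eqv_sym.
- exact: eqv_trans IH2.
- exact: (eqv_cong (o := Some o)).
Qed.

Lemma vof_bind X Y (u : term sr X) (s : X -> term sr Y) : vof u = None -> vof (bind u s) = None.
Proof. by case: u. Qed.

End Semi.

Section Main.
Variables (O : Type) (ar : O -> nat) (E : term ar nat -> term ar nat -> Prop).
Notation sr := (sar ar).
Notation S := (@semi_eqs O ar E).

Definition alpha X (c : quot S X) : X + quot E X := Phi E (repr c).

Definition beta X (s : X + quot E X) : quot S X :=
  match s with inl x => cls S (Var sr x) | inr c => cls S (embA (repr c)) end.

Lemma alpha_cls X (u : term sr X) : alpha (cls S u) = Phi E u.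
Proof. exact: Phi_eqv (repr_cls _ _). Qed.

Lemma main_iso : monad_iso (free_monad S) (semifree (free_monad E)).
Proof.
exists alpha; split.
- move=> X; exists (@beta X).
  + move=> c; rewrite -(cls_repr c) alpha_cls; set u := repr c.
    rewrite /Phi; case E1: (vof u) => [x|] /=.
    * by rewrite (vof_None_Var E1).
    * apply: cls_eq; apply: eqv_trans (eqv_embA (repr_cls _ _)) _.
      apply: eqv_sym; exact: nf.
  + case=> [x|c] /=; rewrite alpha_cls //.
    by rewrite /Phi vof_embA erase_embA cls_repr.
- move=> X Y f m /=; rewrite alpha_cls /alpha; set u := repr m.
  case: u => [x|o a] //=.
  congr inr; rewrite /tmap erase_bind /=; apply: cls_eq.
  apply: eqv_bind_l; exact: eqv_sym (repr_cls _ _).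
- by move=> X x /=; rewrite alpha_cls.
- move=> X m /=; rewrite alpha_cls !alpha_cls; set u := repr m.
  case E1: (vof u) => [c|].
    by rewrite (vof_None_Var E1).
  rewrite /Phi (vof_bind _ E1) (vof_bind _ E1) /tmap !erase_bind /=.
  congr inr; apply: cls_eq.
  apply: eqv_sym; apply: eqv_trans (eqv_bind_l _ (repr_cls _ _)) _.
  apply: eqv_trans (eqv_bind_l _ (eqv_bind_l _ (repr_cls _ _))) _.
  rewrite !bind_assoc /=.
  apply: eqv_bind_r => c.
  rewrite /alpha /Phi; case E2: (vof (repr c)) => [x|] /=.
  + rewrite (vof_None_Var E2) /=; exact: repr_cls.
  + exact: repr_cls.
Qed.

End Main.

Theorem theorem1 (O : Type) (ar : O -> nat)
  (E : term ar nat -> term ar nat -> Prop) :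
  monad_iso (free_monad (@semi_eqs O ar E)) (semifree (free_monad E)).
Proof. exact: main_iso. Qed.
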